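(* Let $S$ be a strongly $E^*$-unitary inverse semigroup, let $R$ be a commutative unital ring, and let $\varphi_1:S^\times\to G_1$ and $\varphi_2:S^\times\to G_2$ be two pure gradings of $S$. Then $L_R(S,\varphi_1)\cong L_R(S,\varphi_2)$ as $R$-algebras.
   Context: $S$ is an inverse semigroup with zero, $s^*$ the unique inverse of $s$, $E$ its idempotents (a meet semilattice with $x\wedge y=xy$, least element $0$), $S^\times=S\setminus\{0\}$, $E^\times=E\setminus\{0\}$. A pure grading is a map $\varphi:S^\times\to G$ to a group with $\varphi(ab)=\varphi(a)\varphi(b)$ whenever $ab\ne0$ and $\varphi^{-1}(1_G)=E^\times$; $S$ is strongly $E^*$-unitary if it has one. For $g\in G$, $E_g=\{x\in E: x\le ss^*$ for some $s$ with $\varphi(s)=g\}$ if $\varphi^{-1}(g)\ne\emptyset$, else $\{0\}$. $\phi_g:E_{g^{-1}}\to E_g$, $x\mapsto sxs^*$ (any $s$ with $\varphi(s)=g$, $x\le s^*s$) is a meet-semilattice isomorphism. For a meet semilattice $P$ with $0$: a filter is a subset $F$, $\emptyset\ne F\ne P$, closed upwards and under meets; $F(P)$ has topology generated by $\{F:x\in F\}$; tight filters $T(P)$ are the closure of the ultrafilters; $V^P_{(x:x_1,\dots,x_n)}=\{\xi\in T(P):x\in\xi, x_i\notin\xi\}$; $\mathcal T_c(P)$ is the generalized Boolean algebra of compact open subsets of $T(P)$. $\mathcal T_c(E_g)$ is identified with the ideal of $\mathcal T_c(E)$ consisting of compact open sets contained in $\bigcup_{x\in E_g}V^E_x$ (via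 $V^{E_g}_{(x:x_1,\dots)}\mapsto V^E_{(x:x_1,\dots)}$), and $\hat\phi_g:\mathcal T_c(E_{g^{-1}})\to\mathcal T_c(E_g)$ is the isomorphism induced by $\phi_g$ ($V_{(x:x_1,\dots,x_n)}\mapsto V_{(\phi_g(x):\phi_g(x_1),\dots,\phi_g(x_n))}$). $\Phi=(\{\mathcal T_c(E_g)\},\{\hat\phi_g\})$ is a partial action of $G$ on $\mathcal T_c(E)$. For a partial action $\Phi=(\{\mathcal I_t\},\{\phi_t\})$ on a generalized Boolean algebra $\mathcal B$ and commutative unital ring $R$: $\mathrm{Lc}(R,\mathcal B)$ is the $R$-algebra of functions $f:R\setminus\{0\}\to\mathcal B$ with pairwise disjoint values, almost all $0$, viewed as the function $\sum_r r1_{f(r)}$ (equivalently locally constant compactly supported $R$-valued functions on the Stone dual of $\mathcal B$); the partial skew group ring $\mathrm{Lc}(R,\mathcal B)\rtimes_\Phi G$ consists of finite sums $\sum_t f_t\delta_t$, $f_t\in\mathrm{Lc}(R,\mathcal I_t)$, with $(a\delta_s)(b\delta_t)=\tilde\phi_s(\tilde\phi_{s^{-1}}(a)b)\delta_{st}$, $\tilde\phi_t(f)=\phi_t\circ f$. Define $L_R(S,\varphi):=\mathrm{Lc}(R,\mathcal T_c(E))\rtimes_\Phi G$. *)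

(* Defs.v *)
From Stdlib Require List.
From HB Require Import structures.
From mathcomp Require Import all_boot all_order all_algebra.
From mathcomp Require Import boolp classical_sets fsbigop.

Set Implicit Arguments.
Unset Strict Implicit.
Unset Printing Implicit Defensive.

Import GRing.Theory.
Local Open Scope classical_set_scope.
Local Open Scope ring_scope.

Record invSemigroup0 := InvSemigroup0 {
  isg_car :> Type;
  isg_mul : isg_car -> isg_car -> isg_car;
  isg_zero : isg_car;
  isg_star : isg_car -> isg_car;
  isg_mulA : forall a b c, isg_mul a (isg_mul b c) = isg_mul (isg_mul a b) c;
  isg_mul0s : forall a, isg_mul isg_zero a = isg_zero;
  isg_muls0 : forall a, isg_mul a isg_zero = isg_zero;
  isg_star_inv1 : forall s, isg_mul (isg_mul s (isg_star s)) s = s;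
  isg_star_inv2 : forall s, isg_mul (isg_mul (isg_star s) s) (isg_star s) = isg_star s;
  isg_star_uniq : forall s t, isg_mul (isg_mul s t) s = s ->
                   isg_mul (isg_mul t s) t = t -> t = isg_star s
}.

Section InvSemigroupDefs.
Variable S : invSemigroup0.

Local Notation "a ** b" := (isg_mul a b) (at level 40, left associativity).
Local Notation "0s" := (isg_zero S).
Local Notation "s ^*" := (isg_star s).

Definition idem (e : S) : Prop := e ** e = e.
Definition ile (x y : S) : Prop := x ** y = x.

(* Pure gradings phi : S^x -> G (values of phi at 0 are irrelevant and are
   never used below). *)
Definition pure_grading (G : groupType) (phi : S -> G) : Prop :=
  (forall a b, a ** b <> 0s -> phi (a ** b) = (phi a * phi b)%g) /\
  (forall s, s <> 0s -> (phi s = 1%g <-> idem s)).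

Definition strongly_Eunitary : Prop :=
  exists (G : groupType) (phi : S -> G), pure_grading phi.

Definition is_filter (F : set S) : Prop :=
  (forall x, F x -> idem x) /\
  (exists x, F x) /\
  (exists y, idem y /\ ~ F y) /\
  (forall x y, F x -> idem y -> ile x y -> F y) /\
  (forall x y, F x -> F y -> F (x ** y)).

Definition is_ultrafilter (F : set S) : Prop :=
  is_filter F /\ (forall F', is_filter F' -> F `<=` F' -> F' `<=` F).

(* Basic open sets of the (patch) topology on the filter space:
   {F | x_i in F for x_i in X, y_j notin F for y_j in Y}. *)
Definition basic (X Y : seq S) : set (set S) :=
  [set F | (forall x, List.In x X -> F x) /\ (forall y, List.In y Y -> ~ F y)].

(* tight filters: the closure of the set of ultrafilters in F(E) *)
Definition tight (xi : set S) : Prop :=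
  is_filter xi /\
  (forall X Y : seq S, basic X Y xi ->
     exists U, is_ultrafilter U /\ basic X Y U).

Definition T_open (U : set (set S)) : Prop :=
  U `<=` tight /\
  (forall xi, U xi -> exists X Y, basic X Y xi /\ (basic X Y `&` tight) `<=` U).

Definition T_compact (U : set (set S)) : Prop :=
  forall (I : Type) (O : I -> set (set S)),
    (forall i, T_open (O i)) -> U `<=` (fun xi => exists i, O i xi) ->
    exists l : seq I, U `<=` (fun xi => exists i, List.In i l /\ O i xi).

Definition compact_open (U : set (set S)) : Prop := T_open U /\ T_compact U.

Definition V (x : S) : set (set S) := [set xi | tight xi /\ xi x].

Variables (G : groupType) (phi : S -> G).

Definition E_ (g : G) : set S :=
  [set x | idem x /\
     ((exists s, s <> 0s /\ phi s = g /\ ile x (s ** s^*)) \/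
      (x = 0s /\ ~ (exists s, s <> 0s /\ phi s = g)))].

(* the union of the V_x, x in E_g; T_c(E_g) is identified with the compact
   open subsets of T(E) contained in D_ g *)
Definition D_ (g : G) : set (set S) := [set xi | exists x, E_ g x /\ V x xi].

(* the relation y = phi_g(x), x in E_{g^-1} *)
Definition phi_rel (g : G) (x y : S) : Prop :=
  exists s, s <> 0s /\ phi s = g /\ ile x (s^* ** s) /\ y = s ** x ** s^*.

(* The map on tight filters dual to hat-phi_g : T_c(E_{g^-1}) -> T_c(E_g):
   xi (in D_{g^-1}) |-> filter generated by phi_g(xi \cap E_{g^-1}). *)
Definition hdual (g : G) (xi : set S) : set S :=
  [set y | idem y /\ exists x z, xi x /\ E_ g^-1 x /\ phi_rel g x z /\ ile z y].

(* tilde-phi_g on Lc(R, T_c(E_{g^-1})), viewing f : R\{0} -> T_c as the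
   function sum_r r 1_{f(r)} on T(E): tilde-phi_g(f) = sum_r r 1_{hat-phi_g(f(r))}. *)
Definition tact (R : pzRingType) (g : G) (f : set S -> R) : set S -> R :=
  fun eta => if `[< D_ g eta >] then f (hdual g^-1 eta) else 0.

(* Lc(R, I) for I the ideal of compact open subsets of D, f viewed as the
   function sum_r r 1_{f(r)} on T(E): f vanishes outside D, each nonempty
   level set f^{-1}(r), r <> 0, is compact open, and f takes finitely many
   values. *)
Definition Lc (R : pzRingType) (D : set (set S)) (f : set S -> R) : Prop :=
  (forall xi, ~ D xi -> f xi = 0) /\
  (forall xi, ~ tight xi -> f xi = 0) /\
  (forall r : R, r != 0 -> compact_open [set xi | f xi = r]) /\
  (exists l : seq R, forall xi, f xi \in l).

(* An element sum_t f_t delta_t is represented by t |-> f_t. *)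
Definition LR_elem (R : pzRingType) (a : G -> set S -> R) : Prop :=
  (forall t, Lc (D_ t) (a t)) /\
  (exists l : seq G, forall t xi, t \notin l -> a t xi = 0).

Definition LR_add (R : pzRingType) (a b : G -> set S -> R) : G -> set S -> R :=
  fun t xi => a t xi + b t xi.

Definition LR_scale (R : pzRingType) (r : R) (a : G -> set S -> R) : G -> set S -> R :=
  fun t xi => r * a t xi.

(* (a_s delta_s)(b_t delta_t) = tphi_s(tphi_{s^-1}(a_s) b_t) delta_{st};
   the coefficient at u collects the terms with t = s^-1 u. *)
Definition LR_mul (R : pzRingType) (a b : G -> set S -> R) : G -> set S -> R :=
  fun u xi => \sum_(s \in [set: G])
     tact s (fun eta => tact s^-1 (a s) eta * b (s^-1 * u)%g eta) xi.

End InvSemigroupDefs.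

Definition LR_iso (S : invSemigroup0) (R : comPzRingType)
  (G1 G2 : groupType) (phi1 : S -> G1) (phi2 : S -> G2) : Prop :=
  exists Psi : (G1 -> set S -> R) -> (G2 -> set S -> R),
    (forall a, LR_elem phi1 a -> LR_elem phi2 (Psi a)) /\
    (forall a a', LR_elem phi1 a -> LR_elem phi1 a' -> Psi a = Psi a' -> a = a') /\
    (forall b, LR_elem phi2 b -> exists a, LR_elem phi1 a /\ Psi a = b) /\
    (forall a a', LR_elem phi1 a -> LR_elem phi1 a' ->
        Psi (LR_add a a') = LR_add (Psi a) (Psi a')) /\
    (forall (r : R) a, LR_elem phi1 a -> Psi (LR_scale r a) = LR_scale r (Psi a)) /\
    (forall a a', LR_elem phi1 a -> LR_elem phi1 a' ->
        Psi (LR_mul phi1 a a') = LR_mul phi2 (Psi a) (Psi a')).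

(* Main.v *)
Require Import Defs.
From HB Require Import structures.
From mathcomp Require Import all_boot all_order all_algebra.
From mathcomp Require Import boolp classical_sets fsbigop.
From Stdlib Require Import ClassicalEpsilon.
Set Implicit Arguments.
Unset Strict Implicit.
Unset Printing Implicit Defensive.
Import GRing.Theory.
Local Open Scope classical_set_scope.
Local Open Scope ring_scope.
Section SG.
Variable S : invSemigroup0.
Local Notation "a ** b" := (isg_mul a b) (at level 40, left associativity).
Local Notation "0s" := (isg_zero S).
Local Notation "s ^*" := (isg_star s).

Lemma mA (a b c : S) : a ** (b ** c) = a ** b ** c. Proof. exact: isg_mulA. Qed.

Lemma star_star (s : S) : s^*^* = s.
Proof.
symmetry; apply: isg_star_uniq; [exact: isg_star_inv2|exact: isg_star_inv1].
Qed.

Lemma star_idem (e : S) : idem e -> e^* = e.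
Proof. rewrite /idem => He; symmetry; apply: isg_star_uniq; by rewrite !He. Qed.

Lemma idem_ss (s : S) : idem (s ** s^*).
Proof. by rewrite /idem mA isg_star_inv1. Qed.

Lemma idem_sts (s : S) : idem (s^* ** s).
Proof. by rewrite /idem mA isg_star_inv2. Qed.

Lemma idem_comm (e f : S) : idem e -> idem f -> e ** f = f ** e /\ idem (e ** f).
Proof.
rewrite /idem => He Hf.
have Hef : forall e f : S, e ** e = e -> f ** f = f -> idem (e ** f).
  clear; move=> e f He Hf.
  set b := isg_star (e ** f).
  have Hc : f ** b ** e = b.
    apply: isg_star_uniq.
    - have -> : e ** f ** (f ** b ** e) ** (e ** f) = e ** f ** b ** (e ** f).
        by rewrite !mA -(mA e f f) Hf -(mA _ e e) He.
      exact: isg_star_inv1.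
    - have -> : f ** b ** e ** (e ** f) ** (f ** b ** e) = f ** (b ** (e ** f) ** b) ** e.
        by rewrite !mA -(mA _ e e) He -(mA _ f f) Hf.
      by rewrite isg_star_inv2.
  have Hb : b ** b = b.
    rewrite -{1 2}Hc.
    have -> : f ** b ** e ** (f ** b ** e) = f ** (b ** (e ** f) ** b) ** e by rewrite !mA.
    by rewrite isg_star_inv2 Hc.
  rewrite /idem -[e ** f]star_star -/b star_idem //.
have H1 := Hef e f He Hf; have H2 := Hef f e Hf He.
split=> //.
have : f ** e = (e ** f)^*.
  apply: isg_star_uniq.
  - rewrite !mA -(mA e f f) Hf -(mA _ e e) He -(mA (e ** f)); exact: H1.
  - rewrite !mA -(mA f e e) He -(mA _ f f) Hf -(mA (f ** e)); exact: H2.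
by rewrite star_idem.
Qed.

Lemma icomm (e f : S) : idem e -> idem f -> e ** f = f ** e.
Proof. by move=> He Hf; case: (idem_comm He Hf). Qed.

Lemma idemM (e f : S) : idem e -> idem f -> idem (e ** f).
Proof. by move=> He Hf; case: (idem_comm He Hf). Qed.

Lemma star_mul (a b : S) : (a ** b)^* = b^* ** a^*.
Proof.
symmetry; apply: isg_star_uniq.
- have -> : a ** b ** (b^* ** a^*) ** (a ** b) = a ** ((b ** b^*) ** (a^* ** a)) ** b.
    by rewrite !mA.
  rewrite (icomm (idem_ss b) (idem_sts a)).
  by rewrite !mA isg_star_inv1 -(mA a b) -(mA a) isg_star_inv1.
- have -> : b^* ** a^* ** (a ** b) ** (b^* ** a^*) = b^* ** ((a^* ** a) ** (b ** b^*)) ** a^*.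
    by rewrite !mA.
  rewrite -(icomm (idem_ss b) (idem_sts a)).
  by rewrite !mA isg_star_inv2 -(mA b^* a^*) -(mA b^*) isg_star_inv2.
Qed.

Lemma star0 : (0s)^* = 0s.
Proof. by apply: star_idem; rewrite /idem isg_mul0s. Qed.

Lemma ss_neq0 (s : S) : s <> 0s -> s ** s^* <> 0s.
Proof. by move=> Hs H; apply: Hs; rewrite -(isg_star_inv1 s) H isg_mul0s. Qed.

Lemma sts_neq0 (s : S) : s <> 0s -> s^* ** s <> 0s.
Proof. by move=> Hs H; apply: Hs; rewrite -(isg_star_inv1 s) -mA H isg_muls0. Qed.

Lemma star_neq0 (s : S) : s <> 0s -> s^* <> 0s.
Proof. by move=> Hs H; apply: Hs; rewrite -(star_star s) H star0. Qed.

Lemma ile_refl (x : S) : idem x -> ile x x. Proof. by []. Qed.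
Lemma ile_trans (x y z : S) : ile x y -> ile y z -> ile x z.
Proof. by rewrite /ile => Hxy Hyz; rewrite -Hxy -mA Hyz. Qed.
Lemma ile_meetl (x y : S) : idem x -> idem y -> ile (x ** y) x.
Proof. by move=> Hx Hy; rewrite /ile (icomm Hx Hy) -mA Hx. Qed.
Lemma ile_meetr (x y : S) : idem y -> ile (x ** y) y.
Proof. by move=> Hy; rewrite /ile -mA Hy. Qed.
Lemma ile_comm (x y : S) : idem x -> idem y -> ile x y -> y ** x = x.
Proof. by move=> Hx Hy H; rewrite (icomm Hy Hx). Qed.

Lemma idem_conj (t x : S) : idem x -> idem (t ** x ** t^*).
Proof.
move=> Hx; rewrite /idem.
have -> : t ** x ** t^* ** (t ** x ** t^*) = t ** (x ** (t^* ** t)) ** x ** t^* by rewrite !mA.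
rewrite (icomm Hx (idem_sts t)) !mA isg_star_inv1 -(mA _ x x) Hx.
done.
Qed.

Lemma conj_mono (t x y : S) : idem x -> idem y -> ile x y ->
  ile (t ** x ** t^*) (t ** y ** t^*).
Proof.
move=> Hx Hy Hxy; rewrite /ile.
have -> : t ** x ** t^* ** (t ** y ** t^*) = t ** (x ** (t^* ** t)) ** y ** t^* by rewrite !mA.
rewrite (icomm Hx (idem_sts t)) !mA isg_star_inv1 -(mA _ x y) Hxy.
done.
Qed.

Lemma conj_back (t x : S) : idem x -> ile x (t ** t^*) ->
  t ** (t^* ** x ** t^*^*) ** t^* = x.
Proof.
move=> Hx Hxt; rewrite star_star.
have -> : t ** (t^* ** x ** t) ** t^* = (t ** t^*) ** x ** (t ** t^*) by rewrite !mA.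
by rewrite (ile_comm Hx (idem_ss t) Hxt) Hxt.
Qed.

Lemma conj_le (t x : S) : idem x -> ile (t ** x ** t^*) (t ** t^*).
Proof.
move=> Hx; rewrite /ile.
have -> : t ** x ** t^* ** (t ** t^*) = t ** x ** (t^* ** t ** t^*) by rewrite !mA.
by rewrite isg_star_inv2.
Qed.

Lemma compat (u v : S) : idem (u ** v^*) -> v ** u^* ** u = u ** v^* ** v.
Proof.
move=> He.
have Hvu : v ** u^* = u ** v^* by rewrite -(star_idem He) star_mul star_star.
have -> : v ** u^* ** u = v ** (v^* ** v) ** (u^* ** u) by rewrite !mA isg_star_inv1.
rewrite -(mA v) (icomm (idem_sts v) (idem_sts u)) !mA Hvu.
by rewrite -(mA (u ** v^*) u) He.
Qed.

End SG.
Section Filt.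
Variable S : invSemigroup0.
Local Notation "a ** b" := (isg_mul a b) (at level 40, left associativity).
Local Notation "0s" := (isg_zero S).
Local Notation "s ^*" := (isg_star s).

Lemma filt_idem (F : set S) x : is_filter F -> F x -> idem x.
Proof. by case=> H _ ; apply: H. Qed.

Lemma filt_up (F : set S) x y : is_filter F -> F x -> idem y -> ile x y -> F y.
Proof. by case=> _ [_ [_ [H _]]]; apply: H. Qed.

Lemma filt_meet (F : set S) x y : is_filter F -> F x -> F y -> F (x ** y).
Proof. by case=> _ [_ [_ [_ H]]]; apply: H. Qed.

Lemma filt_no0 (F : set S) : is_filter F -> ~ F 0s.
Proof.
move=> HF F0; case: (HF) => _ [_ [[y [Hy Fy]] _]]; apply: Fy.
by apply: (filt_up HF F0 Hy); rewrite /ile isg_mul0s.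
Qed.

Lemma filt_neq0 (F : set S) x : is_filter F -> F x -> x <> 0s.
Proof. by move=> HF Fx E; apply: (filt_no0 HF); rewrite -E. Qed.

Lemma tight_filter (xi : set S) : tight xi -> is_filter xi.
Proof. by case. Qed.

Lemma idem_conjS (t x : S) : idem x -> idem (t^* ** x ** t).
Proof. by move=> Hx; have := idem_conj (t^*) Hx; rewrite star_star. Qed.

Lemma conj_backS (t x : S) : idem x -> ile x (t ** t^*) ->
  t ** (t^* ** x ** t) ** t^* = x.
Proof. by move=> Hx Hxt; have := conj_back Hx Hxt; rewrite star_star. Qed.

Definition th (r : S) (xi : set S) : set S :=
  [set y | idem y /\ exists x, xi x /\ ile x (r^* ** r) /\ ile (r ** x ** r^*) y].

Lemma conj_as (t x : S) : idem x -> t ** x ** t^* = (t ** x) ** (t ** x)^*.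
Proof. by move=> Hx; rewrite star_mul (star_idem Hx) !mA -(mA t x x) Hx. Qed.

Lemma th_has (eta : set S) t : is_filter eta -> eta (t ** t^*) -> th (t^*) eta (t^* ** t).
Proof.
move=> HF Ht; split; first exact: idem_sts.
exists (t ** t^*); rewrite star_star; split=> //; split; first exact: idem_ss.
have -> : t^* ** (t ** t^*) ** t = t^* ** t ** (t^* ** t) by rewrite !mA.
by rewrite /ile !(idem_sts t).
Qed.

Lemma th_in (eta : set S) t y : is_filter eta -> idem y -> th (t^*) eta y ->
  eta (t ** y ** t^*).
Proof.
move=> HF Hy [_ [x [Hx [Hxt Hle]]]]; rewrite star_star in Hxt Hle.
have Hix := filt_idem HF Hx.
apply: (filt_up HF Hx (idem_conj t Hy)).
have := conj_mono t (idem_conjS t Hix) Hy Hle.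
by rewrite conj_backS.
Qed.

Lemma th_of (eta : set S) t z : is_filter eta -> eta (t ** t^*) -> eta z ->
  th (t^*) eta (t^* ** z ** t).
Proof.
move=> HF Ht Hz; have Hiz := filt_idem HF Hz.
split; first by have := idem_conj (t^*) Hiz; rewrite star_star.
exists (z ** (t ** t^*)); rewrite star_star; split; first exact: filt_meet.
split; first exact: ile_meetr (idem_ss t).
have -> : t^* ** (z ** (t ** t^*)) ** t = t^* ** z ** t.
  by rewrite !mA -(mA (t^* ** z ** t) t^*) -(mA (t^* ** z)) (mA t t^*) isg_star_inv1.
by have := idem_conj (t^*) Hiz; rewrite star_star.
Qed.

Lemma th_back (eta : set S) t : is_filter eta -> eta (t ** t^*) ->
  th t (th (t^*) eta) = eta.
Proof.
move=> HF Ht; apply/seteqP; split=> y.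
- move=> [Hy [x' [[Hx' [x [Hx [Hxt Hle]]]] [_ Hle2]]]].
  rewrite star_star in Hxt Hle.
  have Hix := filt_idem HF Hx.
  apply: (filt_up HF Hx Hy); apply: ile_trans Hle2.
  have := conj_mono t (idem_conjS t Hix) Hx' Hle.
  by rewrite conj_backS.
- move=> Hy; have Hiy := filt_idem HF Hy.
  split=> //; exists (t^* ** (y ** (t ** t^*)) ** t); split.
    exact: th_of HF Ht (filt_meet HF Hy Ht).
  have Hm : idem (y ** (t ** t^*)) := idemM Hiy (idem_ss t).
  split.
    have := conj_le (t^*) Hm; by rewrite star_star.
  rewrite (conj_backS Hm (ile_meetr _ (idem_ss t))); exact: ile_meetl Hiy (idem_ss t).
Qed.

End Filt.

Section Grading.
Variable S : invSemigroup0.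
Local Notation "a ** b" := (isg_mul a b) (at level 40, left associativity).
Local Notation "0s" := (isg_zero S).
Local Notation "s ^*" := (isg_star s).
Variables (G : groupType) (phi : S -> G).
Hypothesis Hphi : pure_grading phi.

Lemma gr_mul a b : a ** b <> 0s -> phi (a ** b) = (phi a * phi b)%g.
Proof. by case: Hphi => H _; apply: H. Qed.

Lemma gr_idem s : s <> 0s -> idem s -> phi s = 1%g.
Proof. by case: Hphi => _ H Hs Hi; apply/(H s Hs). Qed.

Lemma gr_one s : s <> 0s -> phi s = 1%g -> idem s.
Proof. by case: Hphi => _ H Hs Hi; apply/(H s Hs). Qed.

Lemma gr_star s : s <> 0s -> phi (s^*) = (phi s)^-1%g.
Proof.
move=> Hs; have H0 := ss_neq0 Hs.
by have := gr_idem H0 (idem_ss s); rewrite gr_mul // => /mulg1_eq <-.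
Qed.

Lemma D_char g xi : D_ phi g xi <-> tight xi /\ exists t, t <> 0s /\ phi t = g /\ xi (t ** t^*).
Proof.
split.
- move=> [x [[Hx [[s [Hs [Hps Hle]]]|[-> _]]] [Ht Hxi]]].
  + split=> //; exists s; do 2 split=> //.
    exact: (filt_up (tight_filter Ht) Hxi (idem_ss s) Hle).
  + by case: (filt_no0 (tight_filter Ht) Hxi).
- move=> [Ht [t [Ht0 [Hpt Hxi]]]]; exists (t ** t^*); split; last by [].
  split; first exact: idem_ss.
  by left; exists t; do 2 split=> //; exact: idem_ss.
Qed.

Lemma germ u v x : phi u = phi v -> u <> 0s -> v <> 0s -> idem x -> x <> 0s ->
  ile x (u^* ** u) -> ile x (v^* ** v) -> u ** x = v ** x.
Proof.
move=> Huv Hu Hv Hx Hx0 Hxu Hxv.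
have Exv : v^* ** v ** x = x by rewrite (ile_comm Hx (idem_sts v) Hxv).
have Exu : u^* ** u ** x = x by rewrite (ile_comm Hx (idem_sts u) Hxu).
have Huv0 : u ** v^* <> 0s.
  move=> E; apply: Hx0; rewrite -Exu -Exv.
  by rewrite -!mA (mA u v^*) E isg_mul0s !isg_muls0.
have He : idem (u ** v^*).
  apply: gr_one => //; rewrite gr_mul // gr_star // Huv; exact: mulgV.
transitivity (u ** (v^* ** v ** x)); first by rewrite Exv.
by rewrite !mA -(compat He) -(mA (v ** u^*) u x) -(mA v) (mA u^*) Exu.
Qed.

Lemma hdual_th r xi : is_filter xi -> r <> 0s -> xi (r^* ** r) ->
  hdual phi (phi r) xi = th r xi.
Proof.
move=> HF Hr Hxr; apply/seteqP; split=> y.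
- move=> [Hy [x [z [Hx [_ [[r' [Hr' [Hpr [Hxr' ->]]]] Hzy]]]]]].
  have Hix := filt_idem HF Hx.
  have Hx2 : xi (x ** (r^* ** r)) := filt_meet HF Hx Hxr.
  have Hi2 : idem (x ** (r^* ** r)) := idemM Hix (idem_sts r).
  split=> //; exists (x ** (r^* ** r)); split=> //; split.
    exact: ile_meetr (idem_sts r).
  apply: ile_trans Hzy.
  rewrite (conj_as r Hi2) (germ (esym Hpr) Hr Hr' Hi2 (filt_neq0 HF Hx2)).
  + rewrite -(conj_as r' Hi2); apply: conj_mono => //; exact: ile_meetl Hix (idem_sts r).
  + exact: ile_meetr (idem_sts r).
  + exact: ile_trans (ile_meetl Hix (idem_sts r)) Hxr'.
- move=> [Hy [x [Hx [Hxr' Hle]]]]; split=> //.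
  exists x, (r ** x ** r^*); split=> //; split.
    split; first exact: filt_idem HF Hx.
    left; exists (r^*); split; first exact: star_neq0.
    by rewrite gr_star // star_star.
  split=> //; exists r; do 3 split=> //.
Qed.

End Grading.
Fixpoint somes (I : Type) (l : seq (option I)) : seq I :=
  match l with [::] => [::] | Some i :: l' => i :: somes l' | None :: l' => somes l' end.

Lemma in_somes (I : Type) (l : seq (option I)) i : List.In (Some i) l -> List.In i (somes l).
Proof.
elim: l => [|[j|] l IH] //=.
- by case=> [[->]|H]; [left|right; apply: IH].
- by case=> [//|H]; apply: IH.
Qed.

Section Topo.
Variable S : invSemigroup0.
Local Notation "a ** b" := (isg_mul a b) (at level 40, left associativity).
Local Notation "0s" := (isg_zero S).
Local Notation "s ^*" := (isg_star s).

Lemma T_compact_eq (U W : set (set S)) :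
  (forall xi, U xi <-> W xi) -> T_compact W -> T_compact U.
Proof.
move=> UW HW I O HO HU.
have [l Hl] := HW I O HO (fun xi Wxi => HU xi (proj2 (UW xi) Wxi)).
by exists l => xi Uxi; apply: Hl; apply/UW.
Qed.

Lemma T_compact_union (A : Type) (l : seq A) (C : A -> set (set S)) :
  (forall a, List.In a l -> T_compact (C a)) ->
  T_compact (fun xi => exists a, List.In a l /\ C a xi).
Proof.
elim: l => [|a l IH] HC I O HO HU.
  by exists [::] => xi [b []].
have [l1 H1] := HC a (or_introl erefl) I O HO (fun xi Cxi => HU xi (ex_intro _ a (conj (or_introl erefl) Cxi))).
have [l2 H2] := IH (fun b Hb => HC b (or_intror Hb)) I O HO
  (fun xi '(ex_intro b (conj Hb Cxi)) => HU xi (ex_intro _ b (conj (or_intror Hb) Cxi))).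
exists (l1 ++ l2) => xi [b [[<-|Hb] Cxi]].
- by have [i [Hi Oi]] := H1 xi Cxi; exists i; split=> //; apply: List.in_or_app; left.
- have [i [Hi Oi]] := H2 xi (ex_intro _ b (conj Hb Cxi)).
  by exists i; split=> //; apply: List.in_or_app; right.
Qed.

Lemma V_open (x : S) : T_open [set xi | tight xi /\ xi x].
Proof.
split; first by move=> xi [].
move=> xi [Ht Hx]; exists [:: x], [::]; split.
  by split=> [y [<-|[]]|y []].
by move=> eta [[H1 _] Ht']; split=> //; apply: H1; left.
Qed.

Lemma nV_open (x : S) : T_open [set xi | tight xi /\ ~ xi x].
Proof.
split; first by move=> xi [].
move=> xi [Ht Hx]; exists [::], [:: x]; split.
  by split=> [y []|y [<-|[]]].
by move=> eta [[_ H1] Ht']; split=> //; apply: H1; left.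
Qed.

Lemma T_compact_cap (K : set (set S)) (x : S) :
  T_open K -> T_compact K -> T_compact (K `&` [set xi | xi x]).
Proof.
move=> [KT _] HK I O HO HU.
pose O' (o : option I) := if o is Some i then O i else [set xi | tight xi /\ ~ xi x].
have HO' : forall o, T_open (O' o) by case=> [i|] /=; [exact: HO | exact: nV_open].
have HU' : K `<=` (fun xi => exists o, O' o xi).
  move=> xi Kxi; have [Hx|Hx] := pselect (xi x).
  - by have [i Oi] := HU xi (conj Kxi Hx); exists (Some i).
  - by exists None; split=> //; exact: KT.
have [l Hl] := HK _ O' HO' HU'.
exists (somes l) => xi [Kxi Hx].
have [[i|] [Hi Oi]] := Hl xi Kxi.
- by exists i; split=> //; apply: in_somes.
- by case: Oi.
Qed.

End Topo.
Section Cover.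
Variable S : invSemigroup0.
Local Notation "a ** b" := (isg_mul a b) (at level 40, left associativity).
Local Notation "0s" := (isg_zero S).
Local Notation "s ^*" := (isg_star s).
Variables (G : groupType) (phi : S -> G) (R : pzRingType).

Lemma Lc_tight D (f : set S -> R) xi : Lc D f -> f xi != 0 -> tight xi.
Proof.
move=> [_ [HT _]] Hf; apply: contrapT => Hn; by move: Hf; rewrite HT ?eqxx.
Qed.

Lemma Lc_D D (f : set S -> R) xi : Lc D f -> f xi != 0 -> D xi.
Proof.
move=> [HD _] Hf; apply: contrapT => Hn; by move: Hf; rewrite HD ?eqxx.
Qed.

Lemma cover_level g (f : set S -> R) r : Lc (D_ phi g) f -> r != 0 ->
  exists l : seq S, forall eta, f eta = r ->
    exists s, List.In s l /\ s <> 0s /\ phi s = g /\ eta (s ** s^*).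
Proof.
move=> Hf Hr; have [_ [_ [HC _]]] := Hf; have [_ Hc] := HC r Hr.
pose O (s : S) := [set xi | tight xi /\ xi (s ** s^*) /\ s <> 0s /\ phi s = g].
have HO : forall s, T_open (O s).
  move=> s; split; first by move=> xi [].
  move=> xi [Ht [Hx Hs]]; exists [:: s ** s^*], [::]; split.
    by split=> [y [<-|[]]|y []].
  by move=> eta [[H1 _] Ht']; split=> //; split=> //; apply: H1; left.
have HU : [set xi | f xi = r] `<=` (fun xi => exists s, O s xi).
  move=> xi /= Hxi.
  have Hnz : f xi != 0 by rewrite Hxi.
  have [Ht [t [Ht0 [Hpt Hxt]]]] := proj1 (D_char phi g xi) (Lc_D Hf Hnz).
  by exists t.
have [l Hl] := Hc S O HO HU.
exists l => eta Heta; have [s [Hs [_ [H1 [H2 H3]]]]] := Hl eta Heta.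
by exists s.
Qed.

Lemma cover_nz g (f : set S -> R) : Lc (D_ phi g) f ->
  exists l : seq S, forall eta, f eta != 0 ->
    exists s, List.In s l /\ s <> 0s /\ phi s = g /\ eta (s ** s^*).
Proof.
move=> Hf; have [_ [_ [_ [vl Hvl]]]] := Hf.
suff : exists l : seq S, forall eta, f eta != 0 -> f eta \in vl ->
    exists s, List.In s l /\ s <> 0s /\ phi s = g /\ eta (s ** s^*).
  by move=> [l Hl]; exists l => eta Hn; apply: Hl.
elim: vl {Hvl} => [|r vl [l IH]]; first by exists [::].
have [->|Hr] := eqVneq r 0.
  exists l => eta Hn; rewrite in_cons => /orP[/eqP E|]; last exact: IH.
  by move: Hn; rewrite E eqxx.
have [l1 H1] := cover_level Hf Hr.
exists (l1 ++ l) => eta Hn; rewrite in_cons => /orP[/eqP E|Hin].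
- by have [s [Hs Hs']] := H1 eta E; exists s; split=> //; apply: List.in_or_app; left.
- by have [s [Hs Hs']] := IH eta Hn Hin; exists s; split=> //; apply: List.in_or_app; right.
Qed.

Lemma cover_all (a : G -> set S -> R) : LR_elem phi a ->
  exists l : seq S, forall g eta, a g eta != 0 ->
    exists s, List.In s l /\ s <> 0s /\ phi s = g /\ eta (s ** s^*).
Proof.
move=> [HL [lG HlG]].
suff : exists l : seq S, forall g eta, g \in lG -> a g eta != 0 ->
    exists s, List.In s l /\ s <> 0s /\ phi s = g /\ eta (s ** s^*).
  move=> [l Hl]; exists l => g eta Hn; apply: Hl => //.
  by apply: contraNT Hn => /HlG ->.
elim: lG {HlG} => [|g0 lG [l IH]]; first by exists [::].
have [l1 H1] := cover_nz (HL g0).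
exists (l1 ++ l) => g eta; rewrite in_cons => /orP[/eqP ->|Hin] Hn.
- by have [s [Hs Hs']] := H1 eta Hn; exists s; split=> //; apply: List.in_or_app; left.
- by have [s [Hs Hs']] := IH g eta Hin Hn; exists s; split=> //; apply: List.in_or_app; right.
Qed.

End Cover.
Lemma In_mem (T : eqType) (x : T) (l : seq T) : List.In x l -> x \in l.
Proof. elim: l => //= y l IH [->|H]; rewrite in_cons ?eqxx //; by rewrite IH ?orbT. Qed.

Lemma eqP_neq (R : pzRingType) (x r : R) : x = r -> r != 0 -> x != 0.
Proof. by move=> ->. Qed.

Section WD.
Variable S : invSemigroup0.
Local Notation "a ** b" := (isg_mul a b) (at level 40, left associativity).
Local Notation "0s" := (isg_zero S).
Local Notation "s ^*" := (isg_star s).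
Variables (G1 G2 : groupType) (phi1 : S -> G1) (phi2 : S -> G2).
Hypotheses (H1 : pure_grading phi1) (H2 : pure_grading phi2).

Lemma WD (eta : set S) s s' : is_filter eta -> s <> 0s -> s' <> 0s ->
  eta (s ** s^*) -> eta (s' ** s'^*) -> phi2 s = phi2 s' -> phi1 s = phi1 s'.
Proof.
move=> HF Hs Hs' Hx Hx' Hp.
have Hm := filt_neq0 HF (filt_meet HF Hx Hx').
have H0 : s^* ** s' <> 0s.
  by move=> E; apply: Hm; rewrite !mA -(mA s s^* s') E isg_muls0 isg_mul0s.
have Hi : idem (s^* ** s').
  by apply: (gr_one H2) => //; rewrite (gr_mul H2) // (gr_star H2) // Hp mulVg.
have := gr_idem H1 H0 Hi; rewrite (gr_mul H1) // (gr_star H1) // => /mulg1_eq.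
by rewrite invgK.
Qed.

End WD.

Section Psi.
Variable S : invSemigroup0.
Local Notation "a ** b" := (isg_mul a b) (at level 40, left associativity).
Local Notation "0s" := (isg_zero S).
Local Notation "s ^*" := (isg_star s).
Variables (G1 G2 : groupType) (phi1 : S -> G1) (phi2 : S -> G2).
Hypotheses (H1 : pure_grading phi1) (H2 : pure_grading phi2).
Variable R : pzRingType.

Definition germP (t2 : G2) (eta : set S) (s : S) := s <> 0s /\ phi2 s = t2 /\ eta (s ** s^*).

Definition Psi (a : G1 -> set S -> R) : G2 -> set S -> R := fun t2 eta =>
  if `[< exists s, germP t2 eta s >] then a (phi1 (epsilon (inhabits 0s) (germP t2 eta))) eta
  else 0.

Lemma Psi_spec a t2 eta : Psi a t2 eta = 0 \/
  exists s, germP t2 eta s /\ Psi a t2 eta = a (phi1 s) eta.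
Proof.
rewrite /Psi; case: asboolP => [Hex|_]; last by left.
by right; exists (epsilon (inhabits 0s) (germP t2 eta)); split=> //; apply: epsilon_spec.
Qed.

Lemma Psi_val a eta s : is_filter eta -> s <> 0s -> eta (s ** s^*) ->
  Psi a (phi2 s) eta = a (phi1 s) eta.
Proof.
move=> HF Hs Hx; rewrite /Psi; case: asboolP => [Hex|[]]; last by exists s.
have [Hs' [Hp Hx']] : germP (phi2 s) eta (epsilon (inhabits 0s) (germP (phi2 s) eta)).
  exact: epsilon_spec.
by rewrite (WD H1 H2 HF Hs' Hs Hx' Hx Hp).
Qed.

Lemma Psi_none a t2 eta : ~ (exists s, germP t2 eta s) -> Psi a t2 eta = 0.
Proof. by rewrite /Psi; case: asboolP. Qed.

Lemma vals_list (a : G1 -> set S -> R) : LR_elem phi1 a ->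
  exists vl : seq R, forall g eta, a g eta \in vl.
Proof.
move=> [HL [lG HlG]].
suff [vl Hvl] : exists vl : seq R, forall g eta, g \in lG -> a g eta \in vl.
  exists (0 :: vl) => g eta; have [Hin|Hn] := boolP (g \in lG).
  - by rewrite in_cons Hvl ?orbT.
  - by rewrite HlG // in_cons eqxx.
elim: lG {HlG} => [|g0 lG [vl IH]]; first by exists [::].
have [_ [_ [_ [vl0 Hvl0]]]] := HL g0.
exists (vl0 ++ vl) => g eta; rewrite in_cons mem_cat => /orP[/eqP ->|Hin].
- by rewrite Hvl0.
- by rewrite IH ?orbT.
Qed.

Lemma Psi_elem a : LR_elem phi1 a -> LR_elem phi2 (Psi a).
Proof.
move=> Ha; have [HL _] := Ha.
have [l Hl] := cover_all Ha.
have Hnz : forall t eta, Psi a t eta != 0 ->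
    exists s, germP t eta s /\ Psi a t eta = a (phi1 s) eta /\ tight eta.
  move=> t eta Hn; case: (Psi_spec a t eta) => [E|[s [Hg E]]]; first by rewrite E eqxx in Hn.
  exists s; do 2 split => //; apply: (Lc_tight (HL (phi1 s))); by rewrite -E.
split.
- move=> t; split; [|split; [|split]].
  + move=> xi HD; apply: contrapT => /eqP Hn.
    have [s [[Hs [Hp Hx]] [_ Ht]]] := Hnz t xi Hn.
    by apply: HD; apply/(D_char phi2); split=> //; exists s.
  + move=> xi HT; apply: contrapT => /eqP Hn.
    by have [s [_ [_ Ht]]] := Hnz t xi Hn.
  + move=> r Hr; split.
    * split.
        by move=> xi /= E; have [s [_ [_ Ht]]] := Hnz t xi (eqP_neq E Hr).
      move=> xi /= E.
      have [s [[Hs [Hp Hx]] [Ea Ht]]] := Hnz t xi (eqP_neq E Hr).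
      have [_ [_ [HC _]]] := HL (phi1 s).
      have [[_ Ho] _] := HC r Hr.
      have [X [Y [HB Hsub]]] := Ho xi (esym (etrans (esym E) Ea) : _).
      exists (s ** s^* :: X), Y; split.
        by case: HB => HX HY; split=> // y [<-|Hy]; [exact: Hx|exact: HX].
      move=> eta [[HX HY] Ht'] /=.
      have Heta : a (phi1 s) eta = r by apply: (Hsub eta); split=> //; split=> // y Hy; apply: HX; right.
      by rewrite -Hp Psi_val //; [exact: tight_filter|apply: HX; left].
    * pose C (s : S) : set (set S) :=
        if `[< s <> 0s /\ phi2 s = t >] then [set xi | a (phi1 s) xi = r] `&` [set xi | xi (s ** s^*)]
        else set0.
      apply: (@T_compact_eq _ _ (fun xi => exists s, List.In s l /\ C s xi)); last first.
        apply: T_compact_union => s _; rewrite /C; case: asboolP => _.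
        - have [_ [_ [HC _]]] := HL (phi1 s); have [Ho Hc] := HC r Hr.
          exact: T_compact_cap.
        - by move=> I O _ _; exists [::] => xi [].
      move=> xi /=; split.
      - move=> E; have [s0 [[Hs0 [Hp0 Hx0]] [Ea Ht]]] := Hnz t xi (eqP_neq E Hr).
        have Hn0 : a (phi1 s0) xi != 0 by rewrite -Ea E.
        have [s [Hin [Hs [Hp Hx]]]] := Hl _ _ Hn0.
        exists s; split=> //; rewrite /C; case: asboolP => [_|[]].
          by rewrite /= Hp -Ea.
        by split=> //; rewrite -Hp0; apply: (WD H2 H1 (tight_filter Ht)).
      - move=> [s [_]]; rewrite /C; case: asboolP => // [[Hs Hp]] [Ea Hx].
        have Ht : tight xi by apply: (Lc_tight (HL (phi1 s))); rewrite /= Ea.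
        by rewrite -Hp Psi_val //; exact: tight_filter.
  + have [vl Hvl] := vals_list Ha.
    exists (0 :: vl) => xi; case: (Psi_spec a t xi) => [->|[s [_ ->]]].
      by rewrite in_cons eqxx.
    by rewrite in_cons Hvl orbT.
- exists (map phi2 l) => t xi Hni; apply: contrapT => /eqP Hn.
  have [s0 [[Hs0 [Hp0 Hx0]] [Ea Ht]]] := Hnz t xi Hn.
  have Hn0 : a (phi1 s0) xi != 0 by rewrite -Ea.
  have [s [Hin [Hs [Hp Hx]]]] := Hl _ _ Hn0.
  move/negP: Hni; apply; rewrite -Hp0 -(WD H2 H1 (tight_filter Ht) Hs Hs0 Hx Hx0 Hp).
  by apply: In_mem; apply: List.in_map.
Qed.

End Psi.
Section Term.
Variable S : invSemigroup0.
Local Notation "a ** b" := (isg_mul a b) (at level 40, left associativity).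
Local Notation "0s" := (isg_zero S).
Local Notation "s ^*" := (isg_star s).
Variables (G : groupType) (phi : S -> G).
Hypothesis Hphi : pure_grading phi.
Variable R : pzRingType.

Definition Term (a b : G -> set S -> R) (u : G) (eta : set S) (s : G) : R :=
  tact phi s (fun e => tact phi s^-1 (a s) e * b (s^-1 * u)%g e) eta.

Lemma LR_mulE (a b : G -> set S -> R) u eta : LR_mul phi a b u eta = \sum_(s \in [set: G]) Term a b u eta s.
Proof. by []. Qed.

Lemma Term_noD (a b : G -> set S -> R) u eta s : ~ D_ phi s eta -> Term a b u eta s = 0.
Proof. by move=> HD; rewrite /Term /tact asboolF. Qed.

Lemma Term_val (a b : G -> set S -> R) u eta t : tight eta -> t <> 0s -> eta (t ** t^*) ->
  Term a b u eta (phi t) =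
  if `[< tight (th (t^*) eta) >] then a (phi t) eta * b ((phi t)^-1 * u)%g (th (t^*) eta) else 0.
Proof.
move=> Ht Ht0 Hx; have HF := tight_filter Ht.
have HD : D_ phi (phi t) eta by apply/(D_char phi); split=> //; exists t.
rewrite /Term /tact (asboolT HD).
have Hst := star_neq0 Ht0.
have -> : hdual phi (phi t)^-1 eta = th (t^*) eta.
  by rewrite -(gr_star Hphi Ht0) (hdual_th Hphi) // star_star.
have [Hte|Hnte] := pselect (tight (th (t^*) eta)).
- rewrite (asboolT Hte).
  have HD' : D_ phi (phi t)^-1 (th (t^*) eta).
    apply/(D_char phi); split=> //; exists (t^*); split=> //; split; first exact: (gr_star Hphi Ht0).
    by rewrite star_star; apply: th_has.
  rewrite (asboolT HD') invgK (hdual_th Hphi) //; first by rewrite th_back.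
  + exact: tight_filter.
  + exact: th_has.
- rewrite (asboolF Hnte) asboolF ?mul0r //.
  by move/(D_char phi) => [].
Qed.

Lemma LR_mul_nontight (a b : G -> set S -> R) u eta : ~ tight eta -> LR_mul phi a b u eta = 0.
Proof.
move=> Hn; rewrite LR_mulE; apply: fsbig1 => s _; apply: Term_noD.
by move/(D_char phi) => [].
Qed.

End Term.

Section Mul.
Variable S : invSemigroup0.
Local Notation "a ** b" := (isg_mul a b) (at level 40, left associativity).
Local Notation "0s" := (isg_zero S).
Local Notation "s ^*" := (isg_star s).
Variables (G1 G2 : groupType) (phi1 : S -> G1) (phi2 : S -> G2).
Hypotheses (H1 : pure_grading phi1) (H2 : pure_grading phi2).
Variable R : pzRingType.

Lemma ww_neq0 (w : S) : w ** w^* <> 0s -> w <> 0s.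
Proof. by move=> H E; apply: H; rewrite E isg_mul0s. Qed.

Lemma tr_star (t r : S) : t ** r ** (t ** r)^* = t ** (r ** r^*) ** t^*.
Proof. by rewrite star_mul !mA. Qed.

Lemma Psi_mul (a a' : G1 -> set S -> R) :
  Psi phi1 phi2 (LR_mul phi1 a a') = LR_mul phi2 (Psi phi1 phi2 a) (Psi phi1 phi2 a').
Proof.
apply/funext => v; apply/funext => eta.
have [Ht|Hnt] := pselect (tight eta); last first.
  rewrite LR_mul_nontight //.
  by case: (Psi_spec phi1 phi2 (LR_mul phi1 a a') v eta) => [->|[s [_ ->]]];
    rewrite ?LR_mul_nontight.
have HF := tight_filter Ht.
have [[w0 [Hw0 [Hpw0 Hxw0]]]|Hnone] := pselect (exists w, germP phi2 v eta w); last first.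
  rewrite Psi_none // LR_mulE; apply/esym/fsbig1 => s2 _.
  have [HD|HnD] := pselect (D_ phi2 s2 eta); last exact: Term_noD.
  have [_ [t [Ht0 [Hpt Hxt]]]] := proj1 (D_char phi2 s2 eta) HD.
  rewrite -Hpt (Term_val H2) //; case: asboolP => // Hte.
  case: (Psi_spec phi1 phi2 a' ((phi2 t)^-1 * v)%g (th (t^*) eta)) => [->|[r [[Hr0 [Hpr Hxr]] _]]].
    by rewrite mulr0.
  exfalso; apply: Hnone; exists (t ** r).
  have Hw : eta (t ** r ** (t ** r)^*).
    by rewrite tr_star; apply: th_in => //; exact: idem_ss.
  have Hw0' := ww_neq0 (filt_neq0 HF Hw).
  split=> //; split=> //.
  by rewrite (gr_mul H2) // Hpr mulVKg.
rewrite -Hpw0 (Psi_val H1 H2) //.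
set u := phi1 w0.
have KE : forall t, t <> 0s -> eta (t ** t^*) ->
    Term phi2 (Psi phi1 phi2 a) (Psi phi1 phi2 a') (phi2 w0) eta (phi2 t) =
    Term phi1 a a' u eta (phi1 t).
  move=> t Ht0 Hxt; rewrite (Term_val H2) // (Term_val H1) //.
  case: asboolP => // Hte; have HFe := tight_filter Hte.
  rewrite (Psi_val H1 H2) //.
  have Hr : th (t^*) eta (t^* ** w0 ** (t^* ** w0)^*).
    by rewrite tr_star star_star; apply: th_of.
  have Hr0 := ww_neq0 (filt_neq0 HFe Hr).
  have Hst := star_neq0 Ht0.
  have E2 : ((phi2 t)^-1 * phi2 w0)%g = phi2 (t^* ** w0).
    by rewrite (gr_mul H2) // (gr_star H2).
  have E1 : ((phi1 t)^-1 * u)%g = phi1 (t^* ** w0).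
    by rewrite (gr_mul H1) // (gr_star H1).
  by rewrite E2 E1 (Psi_val H1 H2).
pose germ1 (s1 : G1) (t : S) := t <> 0s /\ phi1 t = s1 /\ eta (t ** t^*).
pose h (s1 : G1) : G2 := phi2 (epsilon (inhabits 0s) (germ1 s1)).
pose T1 := Term phi1 a a' u eta.
pose T2 := Term phi2 (Psi phi1 phi2 a) (Psi phi1 phi2 a') (phi2 w0) eta.
have Hgerm1 : forall s1, T1 s1 != 0 -> germ1 s1 (epsilon (inhabits 0s) (germ1 s1)).
  move=> s1 Hn; apply: epsilon_spec.
  have [HD|HnD] := pselect (D_ phi1 s1 eta); last by rewrite /T1 Term_noD ?eqxx in Hn.
  by have [_ [t Ht']] := proj1 (D_char phi1 s1 eta) HD; exists t.
have Hh : forall s1, T1 s1 != 0 -> T2 (h s1) = T1 s1.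
  move=> s1 Hn; have [Ht0 [Hpt Hxt]] := Hgerm1 s1 Hn.
  by rewrite /T2 /h KE // -/T1 Hpt.
rewrite LR_mulE -/T1 LR_mulE -/T2 (@fsbig_supp G1 _ _ _ setT T1) (@fsbig_supp G2 _ _ _ setT T2).
rewrite (reindex_fsbig h (setT `&` T1 @^-1` [set~ 0]) (setT `&` T2 @^-1` [set~ 0])).
  apply: eq_fsbigr => s1; rewrite inE => -[_ /eqP Hn].
  by rewrite Hh.
split.
- move=> s1 [_ /eqP Hn]; split=> //=; apply/eqP; by rewrite Hh.
- move=> s1 s1'; rewrite !inE => -[_ /eqP Hn] [_ /eqP Hn'] Eh.
  have [Ht0 [Hpt Hxt]] := Hgerm1 s1 Hn.
  have [Ht0' [Hpt' Hxt']] := Hgerm1 s1' Hn'.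
  by rewrite -Hpt -Hpt'; apply: (WD H1 H2 HF Ht0 Ht0' Hxt Hxt' Eh).
- move=> s2 [_ /eqP Hn].
  have [HD|HnD] := pselect (D_ phi2 s2 eta); last by rewrite /T2 Term_noD ?eqxx in Hn.
  have [_ [t [Ht0 [Hpt Hxt]]]] := proj1 (D_char phi2 s2 eta) HD.
  have HT1 : T1 (phi1 t) != 0 by rewrite /T1 -KE // Hpt.
  exists (phi1 t); first by split=> //; apply/eqP.
  have [Ht0' [Hpt' Hxt']] := Hgerm1 _ HT1.
  rewrite /h -Hpt; apply: (WD H2 H1 HF Ht0' Ht0 Hxt' Hxt Hpt').
Qed.

End Mul.
Section Final.
Variable S : invSemigroup0.
Local Notation "a ** b" := (isg_mul a b) (at level 40, left associativity).
Local Notation "0s" := (isg_zero S).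
Local Notation "s ^*" := (isg_star s).
Variables (G1 G2 : groupType) (phi1 : S -> G1) (phi2 : S -> G2).
Hypotheses (H1 : pure_grading phi1) (H2 : pure_grading phi2).
Variable R : pzRingType.

Lemma recover (G : groupType) (phi : S -> G) (a : G -> set S -> R) g eta :
  LR_elem phi a -> a g eta != 0 ->
  tight eta /\ exists s, s <> 0s /\ phi s = g /\ eta (s ** s^*).
Proof. by move=> [HL _] Hn; apply/(D_char phi); apply: (Lc_D (HL g)). Qed.

Lemma elem_nontight (G : groupType) (phi : S -> G) (a : G -> set S -> R) :
  LR_elem phi a -> forall g eta, ~ tight eta -> a g eta = 0.
Proof. by move=> [HL _] g eta Hn; have [_ [HT _]] := HL g; apply: HT. Qed.

Lemma Psi_inj (a a' : G1 -> set S -> R) : LR_elem phi1 a -> LR_elem phi1 a' ->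
  Psi phi1 phi2 a = Psi phi1 phi2 a' -> a = a'.
Proof.
move=> Ha Ha' E; apply/funext => g; apply/funext => eta.
have key : forall b b' : G1 -> set S -> R, LR_elem phi1 b ->
    Psi phi1 phi2 b = Psi phi1 phi2 b' -> b g eta != 0 -> b g eta = b' g eta.
  move=> b b' Hb Eb Hn; have [Ht [s [Hs [Hp Hx]]]] := recover Hb Hn.
  have HF := tight_filter Ht.
  by rewrite -Hp -!(Psi_val H1 H2) // Eb.
have [Hn|/negPn/eqP Hz] := boolP (a g eta != 0); first exact: key.
have [Hn'|/negPn/eqP Hz'] := boolP (a' g eta != 0); last by rewrite Hz Hz'.
by rewrite (key a' a) //.
Qed.

Lemma Psi_surj (b : G2 -> set S -> R) : LR_elem phi2 b ->
  Psi phi1 phi2 (Psi phi2 phi1 b) = b.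
Proof.
move=> Hb; apply/funext => t; apply/funext => eta.
have [Ht|Hnt] := pselect (tight eta); last first.
  rewrite (elem_nontight Hb) //.
  case: (Psi_spec phi1 phi2 (Psi phi2 phi1 b) t eta) => [->|[s [_ ->]]] //.
  by case: (Psi_spec phi2 phi1 b (phi1 s) eta) => [->|[s' [_ ->]]] //; rewrite (elem_nontight Hb).
have HF := tight_filter Ht.
have [[s [Hs [Hp Hx]]]|Hnone] := pselect (exists s, germP phi2 t eta s).
  by rewrite -Hp (Psi_val H1 H2) // (Psi_val H2 H1).
rewrite Psi_none //; apply/esym/eqP; apply: contraT => Hn.
by have [_ [s Hs]] := recover Hb Hn; case: Hnone; exists s.
Qed.

Lemma Psi_add (a a' : G1 -> set S -> R) :
  Psi phi1 phi2 (LR_add a a') = LR_add (Psi phi1 phi2 a) (Psi phi1 phi2 a').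
Proof.
apply/funext => t; apply/funext => eta; rewrite /Psi /LR_add.
by case: asboolP => // _; rewrite addr0.
Qed.

Lemma Psi_scale (r : R) (a : G1 -> set S -> R) :
  Psi phi1 phi2 (LR_scale r a) = LR_scale r (Psi phi1 phi2 a).
Proof.
apply/funext => t; apply/funext => eta; rewrite /Psi /LR_scale.
by case: asboolP => // _; rewrite mulr0.
Qed.

End Final.

Theorem mainTheorem14 (S : invSemigroup0) (R : comPzRingType)
  (G1 G2 : groupType) (phi1 : S -> G1) (phi2 : S -> G2) :
  strongly_Eunitary S ->
  pure_grading phi1 -> pure_grading phi2 ->
  LR_iso R phi1 phi2.
Proof.
move=> _ H1 H2.
exists (@Psi S G1 G2 phi1 phi2 R); split; [|split; [|split; [|split; [|split]]]].
- exact: Psi_elem.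
- exact: Psi_inj.
- move=> b Hb; exists (Psi phi2 phi1 b); split; first exact: Psi_elem.
  exact: Psi_surj.
- by move=> a a' _ _; apply: Psi_add.
- by move=> r a _; apply: Psi_scale.
- by move=> a a' _ _; apply: Psi_mul.
Qed.
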